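(* Let $G$ be the central product of normal subgroups $H,K$ ($G=HK$, $[H,K]=1$), $A=H\cap K$, $D$ a divisible abelian group with trivial action. Let $\theta':\operatorname{H}^2(G,D)\to \operatorname{H}^2(H,D)\oplus\operatorname{H}^2(K,D)\oplus\operatorname{Hom}(H\otimes K,D)$ and $\theta:\operatorname{H}^2(G/A,D)\to \operatorname{H}^2(H/A,D)\oplus\operatorname{H}^2(K/A,D)\oplus\operatorname{Hom}(H/A\otimes K/A,D)$ be as defined in the context ($\theta$ is an isomorphism). Let $(\operatorname{tra},\operatorname{tra},0):\operatorname{Hom}(A\cap H',D)\oplus\operatorname{Hom}(A\cap K',D)\to \operatorname{H}^2(H/A,D)\oplus\operatorname{H}^2(K/A,D)\oplus\operatorname{Hom}(H/A\otimes K/A,D)$, where the first $\operatorname{tra}$ is the transgression for the central extension $1\to A\to H\to H/A\to 1$ restricted to $\operatorname{Hom}(A\cap H',D)$ and the second is the transgression for $1\to A\to K\to K/A\to 1$ restricted to $\operatorname{Hom}(A\cap K',D)$. Then $$\operatorname{Ker}(\theta')=\{\inf(\eta)\mid \eta\in \theta^{-1}(\operatorname{Im}(\operatorname{tra},\operatorname{tra},0))\},$$ where $\inf:\operatorname{H}^2(G/A,D)\to\operatorname{H}^2(G,D)$ is inflation.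
   Context: $X\otimes Y$ denotes the abelian tensor product $X/X'\otimes_{\mathbb{Z}}Y/Y'$. Cohomology classes are represented by 2-cocycles with values in $D$ (written additively). The map $\theta'=(\operatorname{res}^G_H,\operatorname{res}^G_K,\nu)$, where for $\xi\in\operatorname{H}^2(G,D)$ represented by a 2-cocycle $f$, $\nu(\xi)\in\operatorname{Hom}(H\otimes K,D)$ is given by $\nu(\xi)(hH'\otimes kK')=f(h,k)-f(k,h)$ for $h\in H,k\in K$. Similarly, with $\bar G=G/A$, $\bar H=H/A$, $\bar K=K/A$, $\theta=(\operatorname{res}^{\bar G}_{\bar H},\operatorname{res}^{\bar G}_{\bar K},\nu_1)$ with $\nu_1(\xi)(h\bar H'\otimes k\bar K')=f(h,k)-f(k,h)$ for $h\in\bar H,k\in\bar K$; since $\bar H\cap\bar K=1$, $\theta$ is an isomorphism. *)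

(* Defs.v *)
From HB Require Import structures.
From mathcomp Require Import all_boot all_order all_algebra all_fingroup all_solvable.
From mathcomp Require Import commutator quotient.
Set Implicit Arguments. Unset Strict Implicit. Unset Printing Implicit Defensive.
Import GRing.Theory.

Definition divisible (D : zmodType) : Prop :=
  forall (d : D) (n : nat), (0 < n)%N -> exists e : D, (e *+ n)%R = d.

Definition cocycle2 (gT : finGroupType) (D : zmodType) (G : {set gT})
  (f : gT -> gT -> D) : Prop :=
  forall x y z, x \in G -> y \in G -> z \in G ->
    (f x y + f (x * y)%g z = f y z + f x (y * z)%g)%R.

Definition coboundary2 (gT : finGroupType) (D : zmodType) (G : {set gT})
  (f : gT -> gT -> D) : Prop :=
  exists g : gT -> D, forall x y, x \in G -> y \in G ->
    f x y = (g x + g y - g (x * y)%g)%R.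

Definition cohomologous2 (gT : finGroupType) (D : zmodType) (G : {set gT})
  (f1 f2 : gT -> gT -> D) : Prop :=
  coboundary2 G (fun x y => (f1 x y - f2 x y)%R).

Definition ishom (gT : finGroupType) (D : zmodType) (A : {set gT})
  (psi : gT -> D) : Prop :=
  forall a b, a \in A -> b \in A -> psi (a * b)%g = (psi a + psi b)%R.

(* Transgression cocycle for the central extension 1 -> A -> L -> L/A -> 1,
   computed with the section x |-> repr x. *)
Definition tra_cocycle (gT : finGroupType) (D : zmodType) (A : {group gT})
  (psi : gT -> D) : coset_of A -> coset_of A -> D :=
  fun x y => psi (repr x * repr y * (repr (x * y)%g)^-1)%g.

(* The class c in H^2(L/A, D) lies in the image of the transgression
   restricted to Hom(A :&: L', D): c = tra(phi) for some phi in
   Hom(A :&: L', D), where tra(phi) is computed as the transgression of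
   an extension psi in Hom(A, D) of phi. *)
Arguments cocycle2 {gT D}.
Arguments coboundary2 {gT D}.
Arguments cohomologous2 {gT D}.
Arguments ishom {gT D}.
Arguments tra_cocycle {gT D}.

Definition in_tra_image (gT : finGroupType) (D : zmodType) (A L : {group gT})
  (c : coset_of A -> coset_of A -> D) : Prop :=
  exists phi : gT -> D, ishom (A :&: (L^`(1))%g) phi /\
    exists psi : gT -> D, [/\ ishom A psi, {in A :&: (L^`(1))%g, psi =1 phi}
      & cohomologous2 (L / A)%g c (tra_cocycle A psi)].

Definition inflation (gT : finGroupType) (D : zmodType) (A : {group gT})
  (eta : coset_of A -> coset_of A -> D) : gT -> gT -> D :=
  fun x y => eta (coset A x) (coset A y).

Definition in_ker_theta' (gT : finGroupType) (D : zmodType) (H K : {set gT})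
  (f : gT -> gT -> D) : Prop :=
  [/\ coboundary2 H f, coboundary2 K f &
      forall h k, h \in H -> k \in K -> (f h k - f k h)%R = 0%R].

Arguments in_tra_image {gT D}.
Arguments inflation {gT D}.
Arguments in_ker_theta' {gT D}.

(* Main.v *)
Require Import Defs.
From HB Require Import structures.
From mathcomp Require Import all_boot all_order all_algebra all_fingroup all_solvable.
From mathcomp Require Import commutator quotient.
From mathcomp Require Import ring.
Set Implicit Arguments. Unset Strict Implicit. Unset Printing Implicit Defensive.
Import GRing.Theory.

(* Trivial square-zero extension int + D, to use the ring tactic on zmodType identities. *)
Section Ext.
Local Open Scope ring_scope.
Variable D : zmodType.
Definition ext := (int * D)%type.
HB.instance Definition _ := GRing.Zmodule.on ext.
Definition emul (x y : ext) : ext := (x.1 * y.1, x.2 *~ y.1 + y.2 *~ x.1).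
Definition eone : ext := (1, 0).
Lemma emulA : associative emul.
Proof.
case=> n d [m e] [p k]; rewrite /emul /=; congr (_, _); first by rewrite mulrA.
rewrite !mulrzDl -!mulrzA -!addrA; congr (_ + _); rewrite addrC [m * n]mulrC [p * n]mulrC.
by rewrite addrC.
Qed.
Lemma emulC : commutative emul.
Proof. by case=> n d [m e]; rewrite /emul /= mulrC addrC. Qed.
Lemma emul1 : left_id eone emul.
Proof. by case=> n d; rewrite /emul /= mul1r mul0rz mulr1z add0r. Qed.
Lemma emulDl : left_distributive emul +%R.
Proof.
case=> n d [m e] [p k]; rewrite /emul /=; congr (_, _); first by rewrite mulrDl.
by rewrite mulrzDl mulrzDr addrACA.
Qed.
Lemma eone_neq0 : eone != 0.
Proof. by []. Qed.
HB.instance Definition _ := GRing.Zmodule_isComNzRing.Build ext emulA emulC emul1 emulDl eone_neq0.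
Definition emb (d : D) : ext := (0, d).
Lemma emb_inj x y : emb x = emb y -> x = y. Proof. by case. Qed.
Lemma embD x y : emb (x + y) = emb x + emb y. Proof. by []. Qed.
Lemma embN x : emb (- x) = - emb x. Proof. by rewrite /emb /= /GRing.opp /=; congr (_,_). Qed.
Lemma embB x y : emb (x - y) = emb x - emb y. Proof. by rewrite embD embN. Qed.
Lemma emb0 : emb 0 = @GRing.zero (ext : comNzRingType). Proof. by []. Qed.
Lemma use (x y l r : D) : l = r -> x - y = l - r -> x = y.
Proof. by move=> -> /eqP; rewrite subrr subr_eq0 => /eqP. Qed.
Lemma eqD (a b c d : D) : a = b -> c = d -> a + c = b + d.
Proof. by move=> -> ->. Qed.
End Ext.
Ltac zring := apply: emb_inj; rewrite ?(embB, embD, embN, emb0); ring.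

Section Main.
Local Open Scope group_scope.
Variables (gT : finGroupType) (D : zmodType) (G H K A : {group gT}).
Hypotheses (nHG : H <| G) (nKG : K <| G) (defG : (H * K)%g = G :> {set gT})
  (cHK : [~: H, K] = 1) (defA : A :=: H :&: K).
Variable f : gT -> gT -> D.
Hypothesis fcoc : cocycle2 G f.

Lemma sHG : H \subset G. Proof. by rewrite -defG mulG_subl. Qed.
Lemma sKG : K \subset G. Proof. by rewrite -defG mulG_subr. Qed.
Lemma sAH : A \subset H. Proof. by rewrite defA subsetIl. Qed.
Lemma sAK : A \subset K. Proof. by rewrite defA subsetIr. Qed.
Lemma sAG : A \subset G. Proof. exact: subset_trans sAH sHG. Qed.
Lemma nAG : A <| G. Proof. by rewrite defA normalI. Qed.
Lemma nAH : A <| H. Proof. exact: normalS sAH sHG nAG. Qed.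
Lemma nAK : A <| K. Proof. exact: normalS sAK sKG nAG. Qed.
Lemma nGA : G \subset 'N(A). Proof. exact: normal_norm nAG. Qed.

Lemma cHK' h k : h \in H -> k \in K -> h * k = k * h.
Proof.
have sHC : H \subset 'C(K) by apply/commG1P.
by move=> hH kK; exact: (centP (subsetP sHC h hH) k kK).
Qed.

Lemma cAG a x : a \in A -> x \in G -> a * x = x * a.
Proof.
move=> aA; rewrite -defG => /mulsgP[h k hH kK ->].
have aH := subsetP sAH a aA; have aK := subsetP sAK a aA.
by rewrite mulgA -(cHK' hH aK) -mulgA (cHK' aH kK) mulgA.
Qed.

Lemma reprP x : x \in G -> exists2 z, z \in A & repr (coset A x) = z * x.
Proof.
move=> xG; have Nx := subsetP nGA x xG.
apply: kercoset_rcoset; [exact: repr_coset_norm | exact: Nx | exact: coset_reprK].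
Qed.

Lemma repr_quo (L : {group gT}) (u : coset_of A) : A <| L -> u \in L / A -> repr u \in L.
Proof.
move=> nAL uL; rewrite -(quotientGK nAL); apply/morphpreP; split.
  exact: repr_coset_norm.
by rewrite /= coset_reprK.
Qed.

Lemma repr_mulA (u v : coset_of A) :
  exists2 z, z \in A & repr u * repr v = z * repr (u * v : coset_of A).
Proof.
have Nu := repr_coset_norm u; have Nv := repr_coset_norm v.
apply: kercoset_rcoset.
- by rewrite groupM.
- exact: repr_coset_norm.
- rewrite morphM //; change (coset A (repr u) * coset A (repr v) = coset A (repr (u * v : coset_of A))).
  by rewrite !coset_reprK.
Qed.

Lemma cf_H (alpha : gT -> D)
  (halpha : forall x y, x \in H -> y \in H -> f x y = (alpha x + alpha y - alpha (x * y)%g)%R)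
  a h : a \in A -> h \in H -> f h a = f a h.
Proof.
move=> aA hH; have aH := subsetP sAH a aA; have aK := subsetP sAK a aA.
rewrite !halpha // (cHK' hH aK); zring.
Qed.

Lemma cf_K (bK : gT -> D)
  (hb : forall x y, x \in K -> y \in K -> f x y = (bK x + bK y - bK (x * y)%g)%R)
  a k : a \in A -> k \in K -> f k a = f a k.
Proof.
move=> aA kK; have aH := subsetP sAH a aA; have aK := subsetP sAK a aA.
rewrite !hb // -(cHK' aH kK); zring.
Qed.

Section Fwd.
Variables (alpha bK : gT -> D).
Hypothesis halpha : forall x y, x \in H -> y \in H -> f x y = (alpha x + alpha y - alpha (x * y)%g)%R.
Hypothesis hb : forall x y, x \in K -> y \in K -> f x y = (bK x + bK y - bK (x * y)%g)%R.

Lemma cfA a x : a \in A -> x \in G -> f x a = f a x.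
Proof.
move=> aA; rewrite -defG => /mulsgP[h k hH kK ->].
have aH := subsetP sAH a aA; have aK := subsetP sAK a aA.
have hG := subsetP sHG h hH; have kG := subsetP sKG k kK; have aG := subsetP sAG a aA.
have E1 := fcoc hG kG aG.
have E2 := fcoc hG aG kG.
have E3 := fcoc aG hG kG.
rewrite -(cAG aA kG) in E1; rewrite -(cAG aA hG) in E2.
have C1 := cf_H halpha aA hH; have C2 := cf_K hb aA kK.
apply: (use (eqD E1 (eqD (esym E2) (eqD E3 (eqD C1 C2))))); zring.
Qed.

Definition rr x := repr (coset A x).
Definition g x := (alpha ((rr x)^-1 * x)%g - f (rr x) ((rr x)^-1 * x)%g + f 1 1)%R.
Definition f' x y := (f x y - (g x + g y - g (x * y)%g))%R.

Lemma f'coc : cocycle2 G f'.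
Proof.
move=> x y z xG yG zG; have E := fcoc xG yG zG.
rewrite /f' -mulgA; apply: (use E); zring.
Qed.

Lemma rrG x : x \in G -> rr x \in G /\ (rr x)^-1 * x \in A.
Proof.
move=> xG; have [z zA e] := reprP xG; rewrite /rr e; split.
  by rewrite groupM // (subsetP sAG).
by rewrite (cAG zA xG) invMg -mulgA mulVg mulg1 groupV.
Qed.

Lemma f'xa x a : x \in G -> a \in A -> f' x a = 0%R.
Proof.
move=> xG aA; have [rG tA] := rrG xG.
have aG := subsetP sAG a aA; have aH := subsetP sAH a aA.
have tH := subsetP sAH _ tA; have tG := subsetP sAG _ tA.
have Eh := halpha tH aH.
have Ec := fcoc rG tG aG.
have E11 := fcoc (group1 G) (group1 G) aG.
rewrite mulg1 mul1g in E11.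
rewrite mulKVg in Ec.
rewrite /f' /g.
have -> : rr (x * a) = rr x by rewrite /rr coset_kerr.
have -> : rr a = 1 by rewrite /rr coset_id // repr_coset1.
rewrite invg1 mul1g mulgA.
apply/eqP; rewrite subr_eq0; apply/eqP.
apply: (use (eqD Eh (eqD Ec (esym E11)))); zring.
Qed.

Lemma f'ax x a : x \in G -> a \in A -> f' a x = 0%R.
Proof.
move=> xG aA; rewrite -(f'xa xG aA) /f' (cfA aA xG) (cAG aA xG); zring.
Qed.

Lemma f'r x y a : x \in G -> y \in G -> a \in A -> f' x (y * a) = f' x y.
Proof.
move=> xG yG aA; have aG := subsetP sAG a aA.
have E := f'coc xG yG aG.
rewrite (f'xa (groupM xG yG) aA) (f'xa yG aA) in E.
by apply: (use (esym E)); zring.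
Qed.

Lemma f'l x y a : x \in G -> y \in G -> a \in A -> f' (x * a) y = f' x y.
Proof.
move=> xG yG aA; have aG := subsetP sAG a aA.
have E := f'coc xG aG yG.
rewrite (f'xa xG aA) (f'ax yG aA) (cAG aA yG) (f'r xG yG aA) in E.
by apply: (use E); zring.
Qed.

Definition eta (u v : coset_of A) := f' (repr u) (repr v).

Lemma eta_mul u v y : u \in G / A -> v \in G / A -> y \in G ->
  f' (repr (u * v : coset_of A)) y = f' (repr u * repr v) y /\
  f' y (repr (u * v : coset_of A)) = f' y (repr u * repr v).
Proof.
move=> uG vG yG; have ruG := repr_quo nAG uG; have rvG := repr_quo nAG vG.
have [z zA e] := repr_mulA u v.
have e' : repr (u * v : coset_of A) = (repr u * repr v) * z^-1.
  by rewrite -(cAG (groupVr zA) (groupM ruG rvG)) e mulKg.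
by rewrite e' (f'l (groupM ruG rvG) yG (groupVr zA)) (f'r yG (groupM ruG rvG) (groupVr zA)).
Qed.

Lemma eta_coc : cocycle2 (G / A) eta.
Proof.
move=> u v w uG vG wG; rewrite /eta.
have ruG := repr_quo nAG uG; have rvG := repr_quo nAG vG; have rwG := repr_quo nAG wG.
have [e1 _] := eta_mul uG vG rwG; have [_ e2] := eta_mul vG wG ruG.
rewrite e1 e2; exact: f'coc.
Qed.

Lemma eta_inf : cohomologous2 G f (inflation A eta).
Proof.
exists g => x y xG yG; rewrite /inflation /eta.
have [a aA ea] := reprP xG; have [b bA eb] := reprP yG.
rewrite ea eb (cAG aA xG) (cAG bA yG) f'l ?groupM ?(subsetP sAG b) // f'r // /f'; zring.
Qed.

Hypothesis fsym : forall h k, h \in H -> k \in K -> f h k = f k h.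

Lemma eta_sym u v : u \in H / A -> v \in K / A -> (eta u v - eta v u)%R = 0%R.
Proof.
move=> uH vK; have hH := repr_quo nAH uH; have kK := repr_quo nAK vK.
rewrite /eta /f' fsym // (cHK' hH kK); zring.
Qed.

Lemma eta_tra (L : {group gT}) (aL : gT -> D) : A <| L -> L \subset G ->
  (forall x y, x \in L -> y \in L -> f x y = (aL x + aL y - aL (x * y)%g)%R) ->
  in_tra_image A L eta.
Proof.
move=> nAL sLG hL; have sAL := normal_sub nAL.
pose beta x := (aL x - g x)%R.
have hf'L x y : x \in L -> y \in L -> f' x y = (beta x + beta y - beta (x * y)%g)%R.
  by move=> xL yL; rewrite /f' hL // /beta; zring.
have hbA x a : x \in L -> a \in A -> beta (x * a) = (beta x + beta a)%R.
  move=> xL aA; have E := f'xa (subsetP sLG x xL) aA.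
  rewrite (hf'L _ _ xL (subsetP sAL a aA)) in E; apply: (use (esym E)); zring.
pose psi x := (- beta x)%R.
have hpsi : ishom A psi.
  move=> a b aA bA; rewrite /psi hbA ?(subsetP sAL) //; zring.
exists psi; split.
  by move=> a b /setIP[aA _] /setIP[bA _]; apply: hpsi.
exists psi; split => //.
exists (fun u : coset_of A => beta (repr u)) => u v uL vL.
have ruL := repr_quo nAL uL; have rvL := repr_quo nAL vL.
have ruvL := repr_quo nAL (groupM uL vL).
have [z zA e] := repr_mulA u v.
rewrite /eta /tra_cocycle (hf'L _ _ ruL rvL) e mulgK.
rewrite (cAG zA (subsetP sLG _ ruvL)) hbA // /psi; zring.
Qed.

End Fwd.

Lemma back_L (L : {group gT}) (eta0 : coset_of A -> coset_of A -> D) :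
  A <| L -> L \subset G -> in_tra_image A L eta0 ->
  cohomologous2 G f (inflation A eta0) -> coboundary2 L f.
Proof.
move=> nAL sLG [phi [_ [psi [hpsi _ [c hc]]]]] [gam hg].
have sAL := normal_sub nAL.
have psi1 : psi 1 = 0%R.
  have E := hpsi 1 1 (group1 A) (group1 A); rewrite mulg1 in E.
  apply: (use (esym E)); zring.
have psiV a : a \in A -> psi a^-1 = (- psi a)%R.
  move=> aA; have E := hpsi a a^-1 aA (groupVr aA); rewrite mulgV psi1 in E.
  apply: (use (esym E)); zring.
exists (fun x => gam x + c (coset A x) + psi (repr (coset A x) * x^-1)%g)%R.
move=> x y xL yL; have xG := subsetP sLG x xL; have yG := subsetP sLG y yL.
have xN := subsetP nGA x xG; have yN := subsetP nGA y yG.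
have E1 := hg x y xG yG; rewrite /inflation in E1.
have E2 := hc _ _ (mem_quotient A xL) (mem_quotient A yL).
have cxy : coset A (x * y) = (coset A x * coset A y)%g by rewrite morphM.
have [a aA ea] := reprP xG; have [b bA eb] := reprP yG.
have [d dA ed] := reprP (groupM xG yG).
rewrite cxy in ed |- *.
rewrite /tra_cocycle ea eb ed in E2.
rewrite ea eb ed !mulgK.
have ge : a * x * (b * y) * (d * (x * y))^-1 = a * b * d^-1.
  rewrite (mulgA (a * x) b y) -(mulgA a x b) -(cAG bA xG) mulgA invMg.
  by rewrite -(mulgA (a * b) x y) (mulgA (a * b * (x * y))) mulgK.
rewrite ge in E2.
have E3 : psi (a * b * d^-1) = (psi a + psi b - psi d)%R.
  by rewrite hpsi ?groupM ?groupV // hpsi // psiV.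
apply: (use (eqD E1 (eqD E2 E3))); zring.
Qed.

Lemma back_sym (eta0 : coset_of A -> coset_of A -> D) :
  (forall x y, x \in (H / A)%g -> y \in (K / A)%g -> (eta0 x y - eta0 y x)%R = 0%R) ->
  cohomologous2 G f (inflation A eta0) ->
  forall h k, h \in H -> k \in K -> (f h k - f k h)%R = 0%R.
Proof.
move=> hs [gam hg] h k hH kK.
have hG := subsetP sHG h hH; have kG := subsetP sKG k kK.
have E1 := hg h k hG kG; have E2 := hg k h kG hG.
have S := hs _ _ (mem_quotient A hH) (mem_quotient A kK).
rewrite /inflation -(cHK' hH kK) in E2; rewrite /inflation in E1.
apply: (use (eqD E1 (eqD (esym E2) S))); zring.
Qed.

End Main.

Theorem lemma3p2 (gT : finGroupType) (D : zmodType) (G H K A : {group gT})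
  (nHG : (H <| G)%g) (nKG : (K <| G)%g) (defG : (H * K)%g = G :> {set gT})
  (cHK : ([~: H, K] = 1)%g) (defA : (A :=: H :&: K)%g) (divD : divisible D)
  (f : gT -> gT -> D) (fcoc : cocycle2 G f) :
  in_ker_theta' H K f <->
  exists eta : coset_of A -> coset_of A -> D,
    [/\ cocycle2 (G / A)%g eta,
        (* theta(eta) in Im(tra, tra, 0): *)
        in_tra_image A H eta, in_tra_image A K eta,
        (forall x y, x \in (H / A)%g -> y \in (K / A)%g ->
           (eta x y - eta y x)%R = 0%R)
      & cohomologous2 G f (inflation A eta)].
Proof.
split.
- case=> [[a ha] [b hb] hs].
  have fsym h k : h \in H -> k \in K -> f h k = f k h.
    move=> hH kK; apply/eqP; rewrite -subr_eq0; exact/eqP/hs.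
  exists (eta f a); split.
  + exact: (eta_coc nHG nKG defG cHK defA fcoc ha hb).
  + exact: (eta_tra nHG nKG defG cHK defA fcoc ha (nAH nHG nKG defG defA) (sHG defG) ha).
  + exact: (eta_tra nHG nKG defG cHK defA fcoc ha (nAK nHG nKG defG defA) (sKG defG) hb).
  + by move=> x y xH yK; apply: (eta_sym nHG nKG defG cHK defA a fsym).
  + exact: (eta_inf nHG nKG defG cHK defA fcoc ha hb).
- case=> eta0 [_ trH trK hs coh]; split.
  + exact: (back_L nHG nKG defG cHK defA (nAH nHG nKG defG defA) (sHG defG) trH coh).
  + exact: (back_L nHG nKG defG cHK defA (nAK nHG nKG defG defA) (sKG defG) trK coh).
  + exact: (back_sym defG cHK hs coh).
Qed.
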